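(* Let $X,Y$ be complex Banach spaces, $\emptyset\ne I\subseteq\mathbb R^n$, let $\mathcal B$ be a non-empty collection of non-empty subsets of $X$ such that every $x\in X$ belongs to some $B\in\mathcal B$, and let $\mathrm R$ be a non-empty collection of sequences in $\mathbb R^n$ such that $\mathbf t+\mathbf b(l)\in I$ whenever $\mathbf t\in I$, $\mathbf b\in\mathrm R$, $l\in\mathbb N$. Suppose that $F:I\times X\to Y$ is $(\mathrm R,\mathcal B)$-multi-almost periodic, $a\ge 0$ and $x\in X$. If there exists a sequence $\mathbf b(\cdot)$ in $\mathrm R$ all of whose subsequences are unbounded and such that $\mathbf T-\mathbf b(l)\in I$ whenever $\mathbf T\in I$ and $l\in\mathbb N$, then $$\sup_{\mathbf t\in I}\|F(\mathbf t;x)\|_Y=\sup_{\mathbf t\in I,\ |\mathbf t|\ge a}\|F(\mathbf t;x)\|_Y.$$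
   Context: A continuous function $F:I\times X\to Y$ is called $(\mathrm R,\mathcal B)$-multi-almost periodic if for every $B\in\mathcal B$ and every sequence $(\mathbf b_k)\in\mathrm R$ there exist a subsequence $(\mathbf b_{k_l})$ of $(\mathbf b_k)$ and a function $F^\ast:I\times X\to Y$ such that $\lim_{l\to\infty}F(\mathbf t+\mathbf b_{k_l};x)=F^\ast(\mathbf t;x)$ uniformly for $x\in B$ and $\mathbf t\in I$. $|\cdot|$ denotes the Euclidean norm. *)

(* Defs.v *)
From mathcomp Require Import all_boot all_algebra.
From mathcomp Require Import all_classical all_reals all_analysis.
From mathcomp Require Import complex.
Import GRing.Theory Num.Theory ComplexField.
Import numFieldTopology.Exports numFieldNormedType.Exports.
Set Implicit Arguments. Unset Strict Implicit. Unset Printing Implicit Defensive.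
Local Open Scope ring_scope.
Local Open Scope classical_set_scope.

(* A complex Banach space is a
   completeNormedModType R[i]; its norm takes values in R[i] (always of the
   form r%:C with r >= 0); [cnorm] is the corresponding real number. *)
Definition cnorm (R : realType) (V : normedModType R[i]) (v : V) : R :=
  complex.Re `|v|.

Definition enorm (R : realType) (n : nat) (t : 'rV[R]_n) : R :=
  Num.sqrt (\sum_(i < n) t ord0 i ^+ 2).

Definition RB_multi_almost_periodic (R : realType) (n : nat)
  (X Y : normedModType R[i]) (I : set 'rV[R]_n)
  (RR : set (nat -> 'rV[R]_n)) (BB : set (set X))
  (F : 'rV[R]_n -> X -> Y) : Prop :=
  {within [set p : 'rV[R]_n * X | I p.1], continuous (fun p => F p.1 p.2)} /\
  forall B, BB B -> forall b, RR b ->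
    exists (phi : nat -> nat) (Fs : 'rV[R]_n -> X -> Y),
      (forall k l, (k < l)%N -> (phi k < phi l)%N) /\
      forall eps : R, 0 < eps -> exists N : nat, forall l : nat, (N <= l)%N ->
        forall t x, I t -> B x -> cnorm (F (t + b (phi l)) x - Fs t x) < eps.

(* Main.v *)
Require Import Defs.
From mathcomp Require Import all_boot all_algebra.
From mathcomp Require Import all_classical all_reals all_analysis.
From mathcomp Require Import complex.
From mathcomp Require Import lra.
Import order.Order.TTheory GRing.Theory Num.Theory ComplexField.
Import numFieldTopology.Exports numFieldNormedType.Exports.
Local Open Scope ring_scope.
Local Open Scope classical_set_scope.

Lemma cnorm_tri (R : realType) (Y : normedModType R[i]) (u v w : Y) :
  cnorm u <= cnorm v + cnorm (u - w) + cnorm (v - w).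
Proof.
have e : u = v + (u - w) - (v - w).
  by rewrite opprB addrC addrA subrK addrC subrK.
have H : `|u| <= `|v| + `|u - w| + `|v - w|.
  rewrite {1}e; apply: (le_trans (ler_normD _ _)); rewrite normrN lerD2r.
  exact: ler_normD.
move: H; rewrite lecE => /andP[_ H]. move: H. rewrite /cnorm. by case: `|u| => ? ?; case: `|v| => ? ?; case: `|u - w| => ? ?; case: `|v - w| => ? ?.
Qed.

Definition S2 (R : realType) (n : nat) (t : 'rV[R]_n) : R :=
  \sum_(i < n) t ord0 i ^+ 2.
Arguments S2 {R n}.

Lemma S2_ge0 (R : realType) (n : nat) (t : 'rV[R]_n) : 0 <= S2 t.
Proof. by apply: sumr_ge0 => i _; exact: sqr_ge0. Qed.

Lemma S2D (R : realType) (n : nat) (u v : 'rV[R]_n) :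
  S2 (u + v) <= 2 * S2 u + 2 * S2 v.
Proof.
rewrite /S2 !mulr_sumr -big_split /=; apply: ler_sum => i _.
rewrite mxE.
have := sqr_ge0 (u ord0 i - v ord0 i). 
set p := u ord0 i; set q := v ord0 i => h. nra.
Qed.

Theorem proposition2p6 (R : realType) (n : nat)
  (X Y : completeNormedModType R[i]) (I : set 'rV[R]_n)
  (BB : set (set X)) (RR : set (nat -> 'rV[R]_n))
  (F : 'rV[R]_n -> X -> Y) (a : R) (x : X) :
  I !=set0 ->
  BB !=set0 ->
  (forall B, BB B -> B !=set0) ->
  (forall y : X, exists B, BB B /\ B y) ->
  RR !=set0 ->
  (forall t b l, I t -> RR b -> I (t + b l)) ->
  RB_multi_almost_periodic I RR BB F ->
  0 <= a ->
  (exists b, RR b /\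
     (forall phi : nat -> nat, (forall k l, (k < l)%N -> (phi k < phi l)%N) ->
        forall M : R, exists l, M < enorm (b (phi l))) /\
     (forall T l, I T -> I (T - b l))) ->
  ereal_sup [set (cnorm (F t x))%:E | t in I] =
  ereal_sup [set (cnorm (F t x))%:E | t in [set t | I t /\ a <= enorm t]].
Proof.
move=> _ _ _ hB _ hI [_ ap] a0 [b [Rb [unb Imin]]].
have [B [BBB Bx]] := hB x.
have [phi [Fs [phimono conv]]] := ap B BBB b Rb.
apply/le_anti/andP; split; last first.
  by apply: ereal_sup_le => _ [t [It _] <-]; exists t.
apply: ge_ereal_sup => _ [t It <-].
apply/lee_addgt0Pr => e e0.
have e20 : 0 < e / 2 by rewrite divr_gt0.
have [N HN] := conv _ e20.
set s := t - b (phi N).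
have Is : I s by exact: Imin.
set c := b (phi N) - t.
pose psi k := phi (k + N)%N.
have psimono : forall k l, (k < l)%N -> (psi k < psi l)%N.
  by move=> k l kl; apply: phimono; rewrite ltn_add2r.
have [l Hl] := unb psi psimono (Num.sqrt (2 * a ^+ 2 + 2 * S2 c)).
set bb := b (psi l) in Hl.
set t' := s + bb.
have It' : I t' by exact: hI.
have Hbb : 2 * a ^+ 2 + 2 * S2 c < S2 bb.
  have Hp : 0 < S2 bb.
    rewrite -sqrtr_gt0; apply: le_lt_trans (sqrtr_ge0 (2 * a ^+ 2 + 2 * S2 c)) _.
    exact: Hl.
  by move: Hl; rewrite /enorm -/(S2 bb) ltr_sqrt.
have ebb : bb = t' + c by rewrite /t' /s /c addrAC addrA subrK subrr add0r.
have Sbb := S2D _ _ t' c; rewrite -ebb in Sbb.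
have at' : a <= enorm t'.
  rewrite /enorm -/(S2 t') -(ger0_norm a0) -sqrtr_sqr ler_sqrt; last exact: S2_ge0.
  lra.
apply: (@le_trans _ _ ((cnorm (F t' x))%:E + e%:E)%E).
  rewrite -EFinD lee_fin.
  have h1 := HN N (leqnn N) s x Is Bx.
  have h2 := HN (l + N)%N (leq_addl _ _) s x Is Bx.
  have := cnorm_tri _ _ (F t x) (F t' x) (Fs s x).
  have -> : t = s + b (phi N) by rewrite /s subrK.
  rewrite -/(psi l) -/bb -/t' in h2.
  lra.
rewrite leeD2r //; apply: ereal_sup_ubound; exists t' => //.
Qed.
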